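(* Let $n\ge1$, $r\ge0$ and $0\le k\le n$. Then $\kappa\,d\,\mathcal{J}_r\Lambda^k(\mathbb{R}^n)=\mathcal{J}_r\Lambda^k(\mathbb{R}^n)$.
   Context: For a multi-index $\alpha\in\mathbb{N}^n$ and $\sigma=\{\sigma(1)<\dots<\sigma(k)\}\subset\{1,\dots,n\}$, the form monomial is $x^\alpha dx_\sigma:=x_1^{\alpha_1}\cdots x_n^{\alpha_n}\,dx_{\sigma(1)}\wedge\cdots\wedge dx_{\sigma(k)}$. $\mathcal{H}_r\Lambda^k(\mathbb{R}^n)$ is the span of form monomials with $|\alpha|=r$, $|\sigma|=k$. $d$ is the exterior derivative. The Koszul operator is $\kappa(x^\alpha dx_\sigma)=\sum_{i=1}^k(-1)^{i+1}x^\alpha x_{\sigma(i)}\,dx_{\sigma(1)}\wedge\cdots\wedge\widehat{dx_{\sigma(i)}}\wedge\cdots\wedge dx_{\sigma(k)}$, extended linearly. The linear degree is $\mathrm{ldeg}(x^\alpha dx_\sigma):=\#\{i\notin\sigma:\alpha_i=1\}$; $\mathcal{H}_{r,l}\Lambda^k$ is the span of form monomials in $\mathcal{H}_r\Lambda^k$ with linear degree $\ge l$; and $\mathcal{J}_r\Lambda^k(\mathbb{R}^n):=\sum_{l\ge1}\kappa\,\mathcal{H}_{r+l-1,l}\Lambda^{k+1}(\mathbb{R}^n)$ (with $\Lambda^{n+1}=0$). *)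

(* Defs.v *)
From HB Require Import structures.
From mathcomp Require Import all_boot all_order all_algebra.
Set Implicit Arguments. Unset Strict Implicit. Unset Printing Implicit Defensive.
Import Order.TTheory GRing.Theory Num.Theory.
Local Open Scope ring_scope.

(* A (polynomial) differential form: coefficient of x^alpha dx_sigma,
   for alpha a multi-index in N^n and sigma a subset of {1..n}
   (increasingly ordered, as in the paper). *)
Definition pform (R : Type) (n : nat) := n.-tuple nat -> {set 'I_n} -> R.

Definition incr n (a : n.-tuple nat) (j : 'I_n) : n.-tuple nat :=
  [tuple (tnth a i + (i == j))%N | i < n].
Definition decr n (a : n.-tuple nat) (j : 'I_n) : n.-tuple nat :=
  [tuple (tnth a i - (i == j))%N | i < n].

Definition sgn (R : pzRingType) n (s : {set 'I_n}) (j : 'I_n) : R :=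
  (-1) ^+ #|[set m in s | (m < j)%N]|.

(* Koszul operator, linear extension of
   kappa(x^a dx_sigma) = sum_i (-1)^(i+1) x^a x_{sigma(i)} dx_{sigma \ sigma(i)},
   written coefficientwise. *)
Definition koszul (R : pzRingType) n (w : pform R n) : pform R n :=
  fun b t => \sum_(j < n | (j \notin t) && (0 < tnth b j)%N)
               sgn R t j * w (decr b j) (j |: t).

(* Exterior derivative, linear extension of
   d(x^a dx_sigma) = sum_j a_j x^(a - e_j) dx_j /\ dx_sigma, coefficientwise. *)
Definition extd (R : pzRingType) n (w : pform R n) : pform R n :=
  fun b t => \sum_(j < n | j \in t)
               sgn R t j * (tnth b j).+1%:R * w (incr b j) (t :\ j).

Definition ldeg n (a : n.-tuple nat) (s : {set 'I_n}) : nat :=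
  #|[set i | (i \notin s) && (tnth a i == 1%N)]|.

(* H_{r,l} Lambda^k : span of form monomials with |a| = r, |sigma| = k,
   ldeg >= l, i.e. forms whose coefficients vanish off these monomials. *)
Definition Hrl (R : pzRingType) n (r l k : nat) (w : pform R n) : Prop :=
  forall a s, w a s != 0 ->
    [&& sumn a == r, #|s| == k & (l <= ldeg a s)%N].

(* J_r Lambda^k = sum_{l >= 1} kappa H_{r+l-1,l} Lambda^{k+1}  (a sum of
   subspaces: finite sums of elements of the summands). *)
Definition Jr (R : pzRingType) n (r k : nat) (w : pform R n) : Prop :=
  exists (L : nat) (eta : nat -> pform R n),
    (forall l, (1 <= l)%N -> Hrl (r + l - 1) l k.+1 (eta l)) /\
    w = (fun b t => \sum_(1 <= l < L) koszul (eta l) b t).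

(* Main.v *)
Require Import Defs.
From HB Require Import structures.
From mathcomp Require Import all_boot all_order all_algebra ring lra.
From Stdlib Require Import FunctionalExtensionality.
Import Order.TTheory GRing.Theory Num.Theory.
Local Open Scope ring_scope.

Section S.
Variable R : realFieldType.
Variable n : nat.
Implicit Types (w : pform R n) (b : n.-tuple nat) (t : {set 'I_n}) (i j : 'I_n).

Lemma tnth_incr b j i : tnth (incr b j) i = (tnth b i + (i == j))%N.
Proof. by rewrite /incr tnth_mktuple. Qed.
Lemma tnth_decr b j i : tnth (decr b j) i = (tnth b i - (i == j))%N.
Proof. by rewrite /decr tnth_mktuple. Qed.

Lemma decr_incr_neq b i j : i != j -> decr (incr b j) i = incr (decr b i) j.
Proof.
move=> ij; apply: eq_from_tnth => m; rewrite !tnth_incr !tnth_decr !tnth_incr.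
have [->|mi] := eqVneq m i; first by rewrite (negPf ij) !addn0.
by rewrite !subn0.
Qed.
Lemma decr_incr b j : decr (incr b j) j = b.
Proof.
apply: eq_from_tnth => m; rewrite tnth_decr tnth_incr.
by case: (m == j) => /=; rewrite ?addnK ?subn0 ?addn0.
Qed.
Lemma incr_decr b i : (0 < tnth b i)%N -> incr (decr b i) i = b.
Proof.
move=> hb; apply: eq_from_tnth => m; rewrite tnth_incr tnth_decr.
have [->|mi] := eqVneq m i; last by rewrite subn0 addn0.
by rewrite subnK.
Qed.
Lemma decr_decr b i j : decr (decr b i) j = decr (decr b j) i.
Proof. by apply: eq_from_tnth => m; rewrite !tnth_decr subnAC. Qed.

Lemma sgnD1 t j i : sgn R (t :\ j) i =
  (if (j \in t) && (j < i)%N then -1 else 1) * sgn R t i.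
Proof.
rewrite /sgn (cardsD1 j [set m in t | (m < i)%N]) !inE.
have -> : [set m in t :\ j | (m < i)%N] = [set m in t | (m < i)%N] :\ j.
  by apply/setP => m; rewrite !inE andbA.
case: ((j \in t) && (j < i)%N); last by rewrite mul1r.
by rewrite add1n exprS mulrA mulrNN !mul1r.
Qed.

Lemma sgnU1 t j i : sgn R (j |: t) i =
  (if (j \notin t) && (j < i)%N then -1 else 1) * sgn R t i.
Proof.
rewrite /sgn.
case ji: (j < i)%N.
  have -> : [set m in j |: t | (m < i)%N] = j |: [set m in t | (m < i)%N].
    by apply/setP => m; rewrite !inE; have [->|/negPf mj] := eqVneq m j; rewrite ?ji ?andbF ?andbT ?mj //.
  rewrite cardsU1 !inE ji andbT.
  by case: (j \notin t) => /=; rewrite ?add0n ?add1n ?exprS ?mulrA ?mulrNN ?mul1r.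
have -> : [set m in j |: t | (m < i)%N] = [set m in t | (m < i)%N].
  by apply/setP => m; rewrite !inE; have [->|/negPf mj] := eqVneq m j; rewrite ?ji ?andbF ?andbT ?mj //.
by rewrite andbF mul1r.
Qed.

Lemma sgn_sq t j : sgn R t j * sgn R t j = 1.
Proof. by rewrite /sgn -exprMn mulrNN mulr1 expr1n. Qed.


Lemma double_mkcond (P : pred 'I_n) (Q : 'I_n -> pred 'I_n) (c : 'I_n -> R)
   (F : 'I_n -> 'I_n -> R) :
  \sum_(j < n | P j) c j * \sum_(i < n | Q j i) F j i =
  \sum_(j < n) \sum_(i < n) (if P j && Q j i then c j * F j i else 0).
Proof.
rewrite big_mkcond; apply: eq_bigr => j _; case: (P j) => /=.
  rewrite mulr_sumr big_mkcond; apply: eq_bigr => i _.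
  by case: (Q j i).
by rewrite big1.
Qed.

Lemma homotopy w b t : extd (koszul w) b t + koszul (extd w) b t =
  (sumn b + #|t|)%:R * w b t.
Proof.
rewrite /extd /koszul !double_mkcond [X in _ + X]exchange_big -big_split /=.
have -> : (sumn b + #|t|)%:R * w b t =
   \sum_(j < n) (tnth b j + (j \in t))%:R * w b t.
  rewrite -mulr_suml -natr_sum big_split /= sumnE big_tuple.
  congr ((_ + _)%:R * _); rewrite -sum1_card big_mkcond /=.
  by apply: eq_bigr => i _; case: (i \in t).
apply: eq_bigr => j _; rewrite -big_split /= (bigD1 j) //= big1 ?addr0.
  rewrite !inE eqxx tnth_incr eqxx addn1 /=.
  case jt: (j \in t) => /=.
    rewrite decr_incr setD1K // sgnD1 jt ltnn /= mul1r addr0 addn1.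
    have hs := sgn_sq t j.
    transitivity ((sgn R t j * sgn R t j) * ((tnth b j).+1%:R * w b t)).
      by ring.
    by rewrite hs mul1r.
  rewrite add0r addn0.
  case hb: (0 < tnth b j)%N; last first.
    by move: hb; rewrite lt0n => /negbFE/eqP ->; rewrite mul0r.
  rewrite sgnU1 jt ltnn /= mul1r tnth_decr eqxx subn1 prednK // incr_decr //.
  rewrite setU1K ?jt //.
  have hs := sgn_sq t j.
  transitivity ((sgn R t j * sgn R t j) * ((tnth b j)%:R * w b t)).
    by ring.
  by rewrite hs mul1r.
move=> i ij.
have ji : j != i by rewrite eq_sym.
rewrite !inE tnth_incr (negPf ij) addn0 tnth_decr (negPf ji) subn0 /=.
case jt: (j \in t); case it: (i \in t); case hb: (0 < tnth b i)%N => /=;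
  rewrite ?addr0 ?add0r //.
rewrite decr_incr_neq //.
have -> : i |: t :\ j = (i |: t) :\ j.
  apply/setP => m; rewrite !inE.
  by have [->|] := eqVneq m i; rewrite ?ji ?orbT ?andbT.
rewrite sgnD1 sgnU1 jt it /=.
have [hlt|hlt|heq] := ltngtP j i.
- by rewrite mul1r; ring.
- by rewrite mul1r; ring.
- by move/val_inj: heq ij => ->; rewrite eqxx.
Qed.

Lemma antisym_sum0 (F : 'I_n -> 'I_n -> R) :
  (forall i j, F j i = - F i j) -> \sum_(j < n) \sum_(i < n) F j i = 0.
Proof.
move=> hF.
have h : \sum_(j < n) \sum_(i < n) F j i = - \sum_(j < n) \sum_(i < n) F j i.
  rewrite {1}exchange_big -sumrN; apply: eq_bigr => i _.
  rewrite -sumrN; apply: eq_bigr => j _; exact: hF.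
lra.
Qed.

Lemma kk0 w b t : koszul (koszul w) b t = 0.
Proof.
rewrite /koszul double_mkcond; apply: antisym_sum0 => i j.
have [->|ij] := eqVneq i j; first by rewrite !inE eqxx /= andbF oppr0.
have ji : j != i by rewrite eq_sym.
rewrite !inE !tnth_decr (negPf ij) (negPf ji) !subn0 /=.
case jt: (j \in t); case it: (i \in t);
  case hbi: (0 < tnth b i)%N; case hbj: (0 < tnth b j)%N => /=;
  rewrite ?oppr0 //.
rewrite decr_decr (setUCA [set i]) !sgnU1 jt it /=.
have [hlt|hlt|heq] := ltngtP j i.
- ring.
- ring.
- by move/val_inj: heq ji => ->; rewrite eqxx.
Qed.

Lemma koszul_sumf (I : Type) (rs : seq I) (F : I -> pform R n) b t :
  koszul (fun a s => \sum_(l <- rs) F l a s) b t = \sum_(l <- rs) koszul (F l) b t.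
Proof.
rewrite /koszul; under eq_bigr do rewrite mulr_sumr; exact: exchange_big.
Qed.
Lemma extd_sumf (I : Type) (rs : seq I) (F : I -> pform R n) b t :
  extd (fun a s => \sum_(l <- rs) F l a s) b t = \sum_(l <- rs) extd (F l) b t.
Proof.
rewrite /extd; under eq_bigr do rewrite mulr_sumr; exact: exchange_big.
Qed.
Lemma koszul_ext w1 w2 b t : (forall a s, w1 a s = w2 a s) ->
  koszul w1 b t = koszul w2 b t.
Proof. by move=> h; rewrite /koszul; apply: eq_bigr => j _; rewrite h. Qed.
Lemma extd_ext w1 w2 b t : (forall a s, w1 a s = w2 a s) ->
  extd w1 b t = extd w2 b t.
Proof. by move=> h; rewrite /extd; apply: eq_bigr => j _; rewrite h. Qed.
Lemma koszulZ c w b t : koszul (fun a s => c * w a s) b t = c * koszul w b t.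
Proof. by rewrite /koszul mulr_sumr; apply: eq_bigr => j _; ring. Qed.
Lemma koszulB w1 w2 b t :
  koszul (fun a s => w1 a s - w2 a s) b t = koszul w1 b t - koszul w2 b t.
Proof.
rewrite /koszul -sumrB; apply: eq_bigr => j _; ring.
Qed.

Lemma KDK N l K (e : pform R n) b t : Hrl N l K e ->
  koszul (extd (koszul e)) b t = (N + K)%:R * koszul e b t.
Proof.
move=> he.
rewrite (@koszul_ext _ (fun a s => (N + K)%:R * e a s - koszul (extd e) a s)).
  by rewrite koszulB koszulZ kk0 subr0.
move=> a s; apply: (addIr (koszul (extd e) a s)); rewrite subrK homotopy.
have [->|/he/and3P[/eqP-> /eqP-> _]] := eqVneq (e a s) 0; first by rewrite !mulr0.
by [].
Qed.
End S.

Theorem mainTheorem12 (R : realFieldType) (n r k : nat)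
  (hn : (1 <= n)%N) (hk : (k <= n)%N) :
  (forall w : pform R n, Jr r k w -> Jr r k (koszul (extd w))) /\
  (forall w : pform R n, Jr r k w ->
     exists v : pform R n, Jr r k v /\ koszul (extd v) = w).
Proof.
split.
  move=> w [L [eta [he ->]]].
  exists L, (fun l a s => (r + l - 1 + k.+1)%:R * eta l a s); split.
    move=> l hl a s /= hne; apply: (he l hl a s).
    by apply: contraNneq hne => ->; rewrite mulr0.
  apply: functional_extensionality => b; apply: functional_extensionality => t.
  rewrite (@koszul_ext R n _ (fun a s => \sum_(1 <= l < L) extd (koszul (eta l)) a s));
    last by move=> a s; rewrite (extd_sumf R n _ _ (fun l => koszul (eta l))).
  rewrite (koszul_sumf R n _ _ (fun l => extd (koszul (eta l)))).
  apply: eq_big_nat => l /andP[hl _].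
  by rewrite (KDK R n _ _ _ _ _ _ (he l hl)) koszulZ.
move=> w [L [eta [he ->]]].
set c := fun l : nat => ((r + l - 1 + k.+1)%:R : R).
exists (fun b t => \sum_(1 <= l < L) koszul (fun a s => (c l)^-1 * eta l a s) b t).
split.
  exists L, (fun l a s => (c l)^-1 * eta l a s); split => //.
  move=> l hl a s /= hne; apply: (he l hl a s).
  by apply: contraNneq hne => ->; rewrite mulr0.
apply: functional_extensionality => b; apply: functional_extensionality => t.
rewrite (@koszul_ext R n _ (fun a s => \sum_(1 <= l < L)
     extd (koszul (fun a s => (c l)^-1 * eta l a s)) a s));
  last by move=> a s; rewrite (extd_sumf R n _ _ (fun l => koszul (fun a s => (c l)^-1 * eta l a s))).
rewrite (koszul_sumf R n _ _ (fun l => extd (koszul (fun a s => (c l)^-1 * eta l a s)))).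
apply: eq_big_nat => l /andP[hl _].
have hl' : Hrl (r + l - 1) l k.+1 (fun a s => (c l)^-1 * eta l a s).
  move=> a s /= hne; apply: (he l hl a s).
  by apply: contraNneq hne => ->; rewrite mulr0.
rewrite (KDK R n _ _ _ _ _ _ hl') koszulZ mulrA -/(c l) mulfV ?mul1r //.
by rewrite /c pnatr_eq0 addnS.
Qed.
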